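(* Let $(X,d)$ be a compact metric space, $f_{1,\infty}=(f_n)_{n=1}^\infty$ a sequence of continuous maps $f_n:X\to X$, and $(p_k)_{k=1}^\infty$ a sequence of positive integers. Let $(A_i)_{i=0}^\infty$ and $(B_i)_{i=0}^\infty$ be decreasing sequences of compact subsets of $X$ with $\bigcap_{i=0}^\infty A_i=\{a\}$ and $\bigcap_{i=0}^\infty B_i=\{b\}$, where $a\neq b$. Suppose that for every choice $c=(C_k)_k$ with $C_k\in\{A_k,B_k\}$ for each $k$, there exists $x_c\in X$ such that $f_1^{p_k}(x_c)\in C_k$ for all $k\ge 1$. Then $f_{1,\infty}$ is Li-Yorke chaotic.
   Context: For $n\in\mathbb{N}$, $f_1^n=f_n\circ\cdots\circ f_1$. The system $f_{1,\infty}$ is Li-Yorke chaotic if there is an uncountable set $S\subseteq X$ such that for all distinct $x,y\in S$: $\liminf_{n\to\infty}d(f_1^n(x),f_1^n(y))=0$ and $\limsup_{n\to\infty}d(f_1^n(x),f_1^n(y))>0$. *)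

(* Defs.v *)
From HB Require Import structures.
From mathcomp Require Import all_boot all_order all_algebra.
From mathcomp Require Import all_classical all_reals all_analysis.
Set Implicit Arguments. Unset Strict Implicit. Unset Printing Implicit Defensive.
Import Order.TTheory GRing.Theory Num.Theory.
Local Open Scope classical_set_scope.
Local Open Scope ring_scope.

(* Non-autonomous iterates: f is indexed from 1 (f 0 is never used);
   comp_iter f n = f_1^n = f n \o ... \o f 1, comp_iter f 0 = id. *)
Fixpoint comp_iter (X : Type) (f : nat -> X -> X) (n : nat) : X -> X :=
  match n with
  | 0 => id
  | m.+1 => fun x => f m.+1 (comp_iter f m x)
  end.

Definition LiYorke_chaotic (R : realType) (X : metricType R)
    (f : nat -> X -> X) : Prop :=
  exists S : set X, ~ countable S /\
    forall x y, S x -> S y -> x <> y ->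
      limn_einf (fun n => (mdist (comp_iter f n x) (comp_iter f n y))%:E) = 0%E /\
      (0 < limn_esup (fun n => (mdist (comp_iter f n x) (comp_iter f n y))%:E))%E.

(* Main.v *)
Require Import Defs.
From HB Require Import structures.
From mathcomp Require Import all_boot all_order all_algebra.
From mathcomp Require Import all_classical all_reals all_analysis.
From mathcomp Require Import lra.
Import Order.TTheory GRing.Theory Num.Theory.
Local Open Scope classical_set_scope.
Local Open Scope ring_scope.

Lemma decr_le {T : Type} {A : nat -> set T} :
  (forall i, A i.+1 `<=` A i) -> forall i j, (i <= j)%N -> A j `<=` A i.
Proof.
move=> dA i j /subnK <-; elim: (j - i)%N => [|n IH] //= x.
by rewrite addSn => /dA /IH.
Qed.

Lemma alternation (P : pred nat) : (forall K, exists k, (K <= k)%N && P k) ->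
  forall K (bv : bool), exists k, [/\ (K <= k)%N, P k & odd (count P (iota 0 k)) = bv].
Proof.
move=> unb K bv.
have [k1 /andP [Kk1 Pk1]] := unb K.
have exP : exists n, (k1 < n)%N && P n by have [n /andP [? ?]] := unb k1.+1; exists n; apply/andP.
case: (ex_minnP exP) => k2 /andP [k12 Pk2] mink2.
have ck : count P (iota 0 k2) = (count P (iota 0 k1)).+1.
  rewrite -(subnKC k12) iotaD count_cat [count P (iota (0 + _) _)](@eq_in_count _ _ pred0); last first.
    move=> m; rewrite mem_iota => /andP [m1 m2] /=.
    apply/negP => Pm; have := mink2 m; rewrite Pm andbT => /(_ m1).
    by rewrite add0n subnKC // in m2; rewrite leqNgt m2.
  by rewrite count_pred0 addn0 -addn1 iotaD count_cat /= Pk1 addn0 addn1.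
case: (boolP (odd (count P (iota 0 k1)) == bv)) => [/eqP e|ne].
  by exists k1; split.
exists k2; split => //; first by apply: leq_trans Kk1 (ltnW k12).
by rewrite ck /=; move: ne; case: (odd _); case: bv.
Qed.

Lemma p_large {X : Type} (F : nat -> X -> X) (p : nat -> nat) (A B : nat -> set X) (a b : X) :
  (forall i, A i.+1 `<=` A i) -> (forall i, B i.+1 `<=` B i) ->
  \bigcap_i A i = [set a] -> \bigcap_i B i = [set b] -> a <> b ->
  (forall c : nat -> bool, exists x, forall k, (0 < k)%N ->
      (if c k then A k else B k) (F (p k) x)) ->
  forall M, exists K, forall k, (K <= k)%N -> (0 < k)%N -> (M <= p k)%N.
Proof.
move=> dA dB capA capB ab HC.
have ne m : exists K, forall k, (K <= k)%N -> (0 < k)%N -> p k != m.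
  apply: contrapT => /forallNP H.
  pose P := fun j => (0 < j)%N && (p j == m).
  have unb K : exists k, (K <= k)%N && P k.
    have /existsNP [k /not_implyP [Kk /not_implyP [k0 /negP/negPn pk]]] := H K.
    by exists k; rewrite Kk /P k0 pk.
  have [z Hz] := HC (fun k => odd (count P (iota 0 k))).
  have inA : (\bigcap_i A i) (F m z).
    move=> i _; have [k [ik /andP [k0 /eqP pk] ck]] := @alternation P unb i true.
    by have := Hz k k0; rewrite ck pk => /(decr_le dA _ _ ik).
  have inB : (\bigcap_i B i) (F m z).
    move=> i _; have [k [ik /andP [k0 /eqP pk] ck]] := @alternation P unb i false.
    by have := Hz k k0; rewrite ck pk => /(decr_le dB _ _ ik).
  by move: inA inB; rewrite capA capB => -> .
elim=> [|M [K1 IH]]; first by exists 0%N.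
have [K2 H2] := ne M.
exists (maxn K1 K2) => k; rewrite geq_max => /andP [k1 k2] k0.
by rewrite ltn_neqAle eq_sym H2 // IH.
Qed.
Lemma shrink (R : realType) (X : metricType R) (A : nat -> set X) (a : X) :
  compact [set: X] -> (forall i, compact (A i)) ->
  (forall i, A i.+1 `<=` A i) -> \bigcap_i A i = [set a] ->
  forall e, 0 < e -> exists N, forall i, (N <= i)%N -> forall x, A i x -> mdist a x < e.
Proof.
move=> cX cA dA capA e e0.
apply: contrapT => /forallNP H.
have H' : forall N, exists x, A N x /\ e <= mdist a x.
  move=> N; have /existsNP [i /not_implyP [Ni]] := H N.
  move=> /existsNP [x /not_implyP [Aix]] /negP; rewrite -leNgt => ex.
  by exists x; split; [exact: (decr_le dA _ _ Ni _ Aix)|].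
pose y N := projT1 (cid (H' N)).
have yP N : A N (y N) /\ e <= mdist a (y N) by rewrite /y; case: cid.
have [z [_ cz]] := cX (y @ \oo) _ filterT.
have za : z = a.
  suff : (\bigcap_i A i) z by rewrite capA.
  move=> i _.
  have /closure_id -> : closed (A i) by apply: compact_closed => //; exact: metric_hausdorff.
  rewrite clusterE in cz; apply: cz => /=.
  exists i => // n /= iN; exact: (decr_le dA _ _ iN _ (yP n).1).
subst z.
have : (y @ \oo) [set x | e <= mdist a x] by exists 0%N => // n _; exact: (yP n).2.
move=> /(cz _ (ball a e)) /(_ (nbhsx_ballx a e e0)) [w [/= ew]].
rewrite ballEmdist /= => /(le_lt_trans ew); by rewrite ltxx.
Qed.

Lemma idx_exists n K : exists k, [/\ (K <= k)%N, odd k & logn 2 (k./2).+1 = n].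
Proof.
pose j := (2 ^ n * K.*2.+1)%N.
have j0 : (0 < j)%N by rewrite muln_gt0 expn_gt0.
exists (j.-1).*2.+1; split.
- have : (K.*2.+1 <= j)%N by rewrite /j leq_pmull // expn_gt0.
  move=> h; have h1 : (K.*2 <= j.-1)%N by rewrite -ltnS prednK.
  apply: leq_trans (leqnSn _); apply: leq_trans (leq_trans h1 _); first by rewrite -addnn leq_addr.
  by rewrite -addnn leq_addr.
- by rewrite /= odd_double.
- rewrite -[(j.-1).*2.+1]/(true + (j.-1).*2)%N half_bit_double prednK //.
  by rewrite /j lognM ?expn_gt0 // pfactorK // logn_coprime ?addn0 // coprime2n /= odd_double.
Qed.

Theorem mainTheorem6 (R : realType) (X : metricType R)
  (f : nat -> X -> X) (p : nat -> nat) (A B : nat -> set X) (a b : X) :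
  compact [set: X] ->
  (forall n, (0 < n)%N -> continuous (f n)) ->
  (forall k, (0 < k)%N -> (0 < p k)%N) ->
  (forall i, compact (A i)) -> (forall i, compact (B i)) ->
  (forall i, A i.+1 `<=` A i) -> (forall i, B i.+1 `<=` B i) ->
  \bigcap_i A i = [set a] -> \bigcap_i B i = [set b] ->
  a <> b ->
  (forall c : nat -> bool, exists x : X,
     forall k, (0 < k)%N -> (if c k then A k else B k) (comp_iter f (p k) x)) ->
  LiYorke_chaotic f.
Proof.
move=> cX _ _ cA cB dA dB capA capB ab HC.
have shA := @shrink R X _ _ cX cA dA capA.
have shB := @shrink R X _ _ cX cB dB capB.
have PL := @p_large _ (comp_iter f) p _ _ _ _ dA dB capA capB ab HC.
pose cs (s : nat -> bool) k := if odd k then s (logn 2 (k./2).+1) else true.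
pose xs s := projT1 (cid (HC (cs s))).
have xsP s k : (0 < k)%N -> (if cs s k then A k else B k) (comp_iter f (p k) (xs s)).
  by rewrite /xs; case: cid => x /= Hx; apply: Hx.
pose u s t n := mdist (comp_iter f n (xs s)) (comp_iter f n (xs t)).
have tri (x y z : X) : mdist x z <= mdist x y + mdist y z by apply: metric_triangle.
have key s t : s <> t -> limn_einf (fun n => (u s t n)%:E) = 0%E /\
    (0 < limn_esup (fun n => (u s t n)%:E))%E.
  move=> st; split.
  - rewrite limn_einf_lim.
    have -> : einfs (fun n => (u s t n)%:E) = fun _ => 0%E.
      apply/funext => n; apply/eqP; rewrite eq_le; apply/andP; split; last first.
        by apply: le_ereal_inf_tmp => _ [m _ <-]; rewrite lee_fin /u mdist_ge0.
      apply/lee_addgt0Pr => e e0; rewrite add0e.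
      have [N hN] := shA (e / 2) (divr_gt0 e0 (ltr0Sn _ 1)).
      have [K hK] := PL n.
      pose k := ((maxn N K).+1).*2.
      have k0 : (0 < k)%N by rewrite /k double_gt0.
      have kN : (N <= k)%N by rewrite /k -addnn; apply: leq_trans (leq_addr _ _); apply: leq_trans (leqnSn _); rewrite leq_maxl.
      have kK : (K <= k)%N by rewrite /k -addnn; apply: leq_trans (leq_addr _ _); apply: leq_trans (leqnSn _); rewrite leq_maxr.
      apply: (@le_trans _ _ (u s t (p k))%:E).
        by apply: ereal_inf_lbound; exists (p k) => //; exact: hK.
      have hs := xsP s k k0; have ht := xsP t k k0.
      rewrite /cs /k odd_double /= in hs ht.
      have := hN _ kN _ hs; have := hN _ kN _ ht.
      rewrite lee_fin /u; set x := comp_iter f _ (xs s); set y := comp_iter f _ (xs t).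
      move=> ay ax; have := tri x a y; rewrite metric_sym => h.
      apply/ltW; apply: le_lt_trans h _.
      by rewrite [e]splitr; apply: ltrD => //; rewrite metric_sym.
    by rewrite lim_cst.
  - have [n0 hn0] : exists n0, s n0 != t n0.
      apply: contrapT => /forallNP H; apply: st; apply/funext => n.
      by apply/eqP; apply: contrapT => /negP; exact: H.
    pose d := mdist a b / 3.
    have d0 : 0 < d by rewrite divr_gt0 // mdist_gt0; apply/eqP.
    have [NA hA] := shA d d0.
    have [NB hB] := shB d d0.
    rewrite limn_esup_lim; apply: (@lt_le_trans _ _ d%:E); first by rewrite lte_fin.
    apply: lime_ge; first exact: is_cvg_esups.
    apply: nearW => n.
    have [K hK] := PL n.
    have [k [kK ok lk]] := idx_exists n0 (maxn (maxn NA NB) K).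
    have k0 : (0 < k)%N by case: k ok {kK lk}.
    move: kK; rewrite !geq_max => /andP [/andP [kA kB] kK].
    apply: (@le_trans _ _ (u s t (p k))%:E); last first.
      by apply: ereal_sup_ubound; exists (p k) => //; exact: hK.
    rewrite lee_fin.
    have hs := xsP s k k0; have ht := xsP t k k0.
    rewrite /cs ok lk in hs ht.
    rewrite /u; set x := comp_iter f _ (xs s) in hs *; set y := comp_iter f _ (xs t) in ht *.
    have ab3 : mdist a b = 3 * d by rewrite /d mulrC divfK.
    move: hn0 hs ht; case: (s n0); case: (t n0) => // _ hs ht.
    + have := hB _ kB _ ht; have := hA _ kA _ hs.
      have := tri a x b; have := tri x y b. move=> h1 h2 h3 h4.
      rewrite [mdist b y]metric_sym in h4. lra.
    + have := hA _ kA _ ht; have := hB _ kB _ hs.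
      have := tri a y b; have := tri y x b. move=> h1 h2 h3 h4.
      rewrite [mdist b x]metric_sym in h3. rewrite [mdist x y]metric_sym. lra.
have xs_inj : injective xs.
  move=> s t e; apply: contrapT => st; have [_] := key s t st.
  rewrite /u e.
  under eq_fun do rewrite mdistxx.
  rewrite is_cvg_limn_esupE; first by rewrite lim_cst // ltxx.
  by apply: is_cvg_cst.
exists (range xs); split; last first.
  move=> x y [s _ <-] [t _ <-] xy; apply: key => st; apply: xy; rewrite st.
  by [].
move/countable_injP => [h hinj].
pose g s := h (xs s).
have ginj : injective g.
  by move=> s t /hinj; rewrite !inE => /(_ (ex_intro2 _ _ s I erefl) (ex_intro2 _ _ t I erefl)) /xs_inj.
pose e n := if pselect (exists s, g s = n) is left P then projT1 (cid P) else (fun _ => false).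
pose dg n := ~~ e n n.
have edg : e (g dg) = dg.
  rewrite /e; case: pselect => [P|nP]; last by exfalso; apply: nP; exists dg.
  by case: cid => s' /= /ginj.
move: (congr1 (fun F => F (g dg)) edg) => /=.
set m := g dg; rewrite [dg m]/dg.
by case: (e m m).
Qed.
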